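(* Let $M$ be a complete oriented Riemannian manifold and $G$ a locally compact unimodular group acting properly, cocompactly and isometrically on $M$. Let $T:M\to M$ be a $G$-equivariant isometry, let $g\in G$ have centraliser $Z$, and suppose the conjugacy class of $g$ in $G$ is closed. Then the quotient $M^{gT}/Z$ of the fixed-point set $M^{gT}=\{m\in M: gTm=m\}$ by the action of $Z$ is compact. *)

(* Defs.v *)
From HB Require Import structures.
From mathcomp Require Import all_boot all_order all_algebra.
From mathcomp Require Import all_classical all_reals all_analysis.
Set Implicit Arguments. Unset Strict Implicit. Unset Printing Implicit Defensive.
Import Order.TTheory GRing.Theory Num.Theory.
Local Open Scope classical_set_scope.
Local Open Scope ring_scope.

Definition topological_group (G : topologicalType)
  (mul : G -> G -> G) (inv : G -> G) (e : G) : Prop :=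
  [/\ (forall x y z, mul x (mul y z) = mul (mul x y) z),
      (forall x, mul e x = x /\ mul x e = x),
      (forall x, mul (inv x) x = e /\ mul x (inv x) = e),
      continuous (fun p : G * G => mul p.1 p.2) &
      continuous inv].

Definition locally_compact_space (X : topologicalType) : Prop :=
  hausdorff_space X /\ locally_compact [set: X].

Definition borel_sets (X : topologicalType) : set (set X) :=
  smallest (sigma_algebra setT) (@open X).

Definition nonzero_radon_measure {R : realType} (X : topologicalType)
  (mu : set X -> \bar R) : Prop :=
  mu set0 = 0%E /\
      (forall A, borel_sets A -> (0 <= mu A)%E) /\
      (forall F : (set X)^nat, (forall n, borel_sets (F n)) ->
          trivIset setT F ->
          (fun n => \sum_(0 <= i < n) mu (F i))%E @ \oo --> mu (\bigcup_n F n)) /\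
      (forall K, compact K -> (mu K < +oo)%E) /\
      (forall A, borel_sets A ->
          mu A = ereal_inf [set mu U | U in [set U | open U /\ A `<=` U]]) /\
      (forall U, open U ->
          mu U = ereal_sup [set mu K | K in [set K | compact K /\ K `<=` U]]) /\
      (exists A, borel_sets A /\ mu A != 0%E).

(* unimodular: a (left) Haar measure which is also right invariant,
   i.e. there is a nonzero Radon measure invariant under left and right
   translations *)
Definition unimodular {R : realType} (G : topologicalType)
  (mul : G -> G -> G) : Prop :=
  exists mu : set G -> \bar R, nonzero_radon_measure mu /\
    forall g A, borel_sets A ->
      mu ((mul g) @` A) = mu A /\ mu ((fun x => mul x g) @` A) = mu A.

Definition continuous_action (G M : topologicalType)
  (mul : G -> G -> G) (e : G) (act : G -> M -> M) : Prop :=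
  [/\ (forall m, act e m = m),
      (forall g h m, act (mul g h) m = act g (act h m)) &
      continuous (fun p : G * M => act p.1 p.2)].

Definition proper_action (G M : topologicalType) (act : G -> M -> M) : Prop :=
  forall C : set (M * M), compact C ->
    compact ((fun p : G * M => (act p.1 p.2, p.2)) @^-1` C).

(* A / H is compact (for the quotient topology of the subspace A of M),
   where A is stable under H; unfolded: every cover of A by open sets whose
   traces on A are H-saturated has a finite subcover. *)
Definition quotient_compact (G M : topologicalType) (act : G -> M -> M)
  (H : set G) (A : set M) : Prop :=
  forall (I : Type) (U : I -> set M),
    (forall i, open (U i)) ->
    (forall i h x, H h -> A x -> U i x -> U i (act h x)) ->
    A `<=` \bigcup_i U i ->
    exists2 J : set I, finite_set J & A `<=` \bigcup_(i in J) U i.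

Definition cocompact_action (G M : topologicalType) (act : G -> M -> M) :=
  quotient_compact act setT setT.

Definition complete_metric {R : realType} (M : metricType R) : Prop :=
  forall F : set_system M, ProperFilter F -> cauchy F -> exists l : M, F --> l.

Definition centraliser (G : Type) (mul : G -> G -> G) (g : G) : set G :=
  [set z | mul z g = mul g z].

Definition conj_class (G : Type) (mul : G -> G -> G) (inv : G -> G) (g : G)
  : set G := [set mul (mul h g) (inv h) | h in setT].

Definition fixed_set (G M : Type) (act : G -> M -> M) (g : G) (T : M -> M)
  : set M := [set m | act g (T m) = m].

(* Main.v *)
Require Import Defs.
From HB Require Import structures.
From mathcomp Require Import all_boot all_order all_algebra.
From mathcomp Require Import all_classical all_reals all_analysis.
From mathcomp Require Import finmap.
Import Order.TTheory GRing.Theory Num.Theory.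
Local Open Scope classical_set_scope.
Local Open Scope ring_scope.
Set Implicit Arguments. Unset Strict Implicit.

Definition ptd {X : Type} (a : X) : Type := X.
HB.instance Definition _ (X : topologicalType) (a : X) := Topological.copy (ptd a) X.
HB.instance Definition _ (X : topologicalType) (a : X) := isPointed.Build (ptd a) a.

Lemma compact_fin (X : topologicalType) (A : set X) (I : Type) (U : I -> set X) :
  compact A -> (forall i, open (U i)) -> A `<=` \bigcup_i U i ->
  exists2 J : set I, finite_set J & A `<=` \bigcup_(i in J) U i.
Proof.
move=> cA oU AU.
have [->|/set0P [a Aa]] := eqVneq A set0; first by exists set0 => //; exact: finite_set0.
have cA' : cover_compact (A : set (ptd a)) by rewrite -compact_cover.
have [|x /AU [i _ Uix]|D' D'sub AD'] := cA' (set X) (range U) id.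
- by move=> _ [i _ <-]; exact: (oU i).
- by exists (U i) => //; exists i.
have : forall V : set X, exists S : set I,
    finite_set S /\ (range U V -> exists2 i, S i & U i = V).
  move=> V; case: (pselect (range U V)) => [[i _ <-]|nV].
  - by exists [set i]; split; [exact: finite_set1 | move=> _; exists i].
  - by exists set0; split.
move=> /choice [f Hf].
exists (\bigcup_(V in (fun V : set X => V \in D')) f V).
  by apply: bigcup_finite; [exact: finite_fset | move=> V _; case: (Hf V)].
move=> x /AD' [V D'V Vx].
have /set_mem := D'sub _ D'V.
case: (Hf V) => _ H /H [i fVi UiV].
by exists i; [exists V | rewrite UiV].
Qed.

Lemma fin_compact (X : topologicalType) (A : set X) :
  (forall (I : Type) (U : I -> set X), (forall i, open (U i)) -> A `<=` \bigcup_i U i ->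
  exists2 J : set I, finite_set J & A `<=` \bigcup_(i in J) U i) -> compact A.
Proof.
move=> H.
have [->|/set0P [a Aa]] := eqVneq A set0; first exact: compact0.
suff : cover_compact (A : set (ptd a)) by rewrite -compact_cover.
move=> I D f fo cov.
have [||J fJ AJ] := H I (fun k : I => if pselect (D k) then f k else set0).
- by move=> k; case: pselect => Dk; [exact: fo|exact: open0].
- move=> x Ax; have [k Dk fkx] := cov x Ax.
  by exists k => //; case: pselect.
have fJD : finite_set (J `&` D) by exact: finite_setIl.
exists (fset_set (J `&` D)).
  by move=> k; rewrite in_fset_set // => /set_mem [_ Dk]; apply/mem_set.
move=> x /AJ [k Jk]; case: pselect => // Dk fkx.
exists k => //.
rewrite /= in_fset_set //; exact/mem_set.
Qed.

Lemma bigcup_compact (X : topologicalType) (I : Type) (J : set I) (F : I -> set X) :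
  finite_set J -> (forall i, J i -> compact (F i)) -> compact (\bigcup_(i in J) F i).
Proof.
move=> fJ cF; apply: fin_compact => I' f fo cov.
have : forall i, exists S : set I', finite_set S /\
    (J i -> F i `<=` \bigcup_(k in S) f k).
  move=> i; case: (pselect (J i)) => Ji; last by exists set0; split => //; exact: finite_set0.
  have cv : F i `<=` \bigcup_k f k by move=> x Fx; apply: cov; exists i.
  have [S fS FS] := compact_fin (cF i Ji) fo cv.
  by exists S.
move=> /choice [S HS].
exists (\bigcup_(i in J) S i).
  by apply: bigcup_finite => // i _; case: (HS i).
move=> x [i Ji Fix].
case: (HS i) => _ /(_ Ji _ Fix) [k Sik fkx].
by exists k => //; exists i.
Qed.

Lemma lc_nbhs (X : topologicalType) (x : X) (U : set X) :
  hausdorff_space X -> locally_compact [set: X] -> nbhs x U ->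
  exists N, [/\ nbhs x N, compact N & N `<=` U].
Proof.
move=> hX lX nU.
have [V nV [cV clV]] := lX x I.
rewrite withinET in nV.
have [D nD DU] := compact_regular hX cV nV nU.
exists (V `&` closure D); split.
- by apply: filterI => //; apply: filterS nD; exact: subset_closure.
- by apply: compact_closedI => //; exact: closed_closure.
- by move=> y [_ /DU].
Qed.

Lemma closed_eqfun (X Y : topologicalType) (f h : X -> Y) :
  hausdorff_space Y -> continuous f -> continuous h -> closed [set x | f x = h x].
Proof.
move=> hY cf ch x clx; apply: hY => A B nA nB.
have nA' : nbhs x (f @^-1` A) by exact: cf.
have nB' : nbhs x (h @^-1` B) by exact: ch.
have [y [fhy [Ay By]]] := clx _ (filterI nA' nB').
by exists (f y); split => //; rewrite fhy.
Qed.

Lemma baire_lc (X : topologicalType) (Cl : set X) (C : nat -> set X) :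
  hausdorff_space X -> locally_compact [set: X] -> closed Cl -> Cl !=set0 ->
  (forall n, closed (C n)) -> Cl `<=` \bigcup_n C n ->
  exists n (Q : set X), [/\ open Q, Q `&` Cl !=set0 & Q `&` Cl `<=` C n].
Proof.
move=> hX lX clCl [c0 Clc0] clC ClC.
apply: contrapT => H.
have step : forall n (Q : set X), open Q -> Q `&` Cl !=set0 ->
    exists x, [/\ Q x, Cl x & ~ C n x].
  move=> n Q oO ne; apply: contrapT => nx; apply: H; exists n, Q; split => //.
  move=> y [Oy Cly]; apply: contrapT => nC; apply: nx; by exists y.
pose P (Q : set X) := [/\ open Q, Q `&` Cl !=set0 & compact (closure Q)].
have step2 : forall (p : nat * {Q : set X | P Q}), exists Q' : {Q : set X | P Q},
    closure (sval Q') `<=` sval p.2 `\` C p.1.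
  move=> [n [Q [oO neO cO]]] /=.
  have [x [Ox Clx nCx]] := step n Q oO neO.
  have nW : nbhs x (Q `\` C n).
    apply: open_nbhs_nbhs; split => //.
    by rewrite setDE; apply: openI => //; exact: closed_openC.
  have [N [nN cN NW]] := lc_nbhs hX lX nW.
  have clN : closure N° `<=` N.
    move=> y cly; apply: (compact_closed hX cN).
    exact: (closureS (@interior_subset _ N)).
  have Q'P : P N°.
    split; first exact: open_interior.
    - by exists x; split => //; exact: nbhs_interior.
    - apply: subclosed_compact cN _ => //; first exact: closed_closure.
  by exists (exist _ N° Q'P) => y /clN /NW.
move: step2 => /choice [nxt Hnxt].
have [N0 [nN0 cN0 _]] := lc_nbhs hX lX (@filterT _ (nbhs c0) _).
have P0 : P N0°.
  split; first exact: open_interior.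
  - by exists c0; split => //; exact: nbhs_interior.
  - apply: (subclosed_compact _ cN0); first exact: closed_closure.
    move=> y cly; apply: (compact_closed hX cN0).
    exact: (closureS (@interior_subset _ N0)).
pose s : nat -> {Q : set X | P Q} :=
  fix s n := if n is m.+1 then nxt (m, s m) else exist _ N0° P0.
pose Qn n := closure (sval (s n)) `&` Cl.
have sS n : closure (sval (s n.+1)) `<=` sval (s n) `\` C n := Hnxt (n, s n).
have Qdec : forall m n, (m <= n)%N -> Qn n `<=` Qn m.
  move=> m n /subnK <-; elim: (n - m)%N => // k IH.
  move=> y [cy Cly]; apply: IH; split => //.
  have [sy _] := sS (k + m)%N y cy.
  exact: subset_closure.
have Qne n : Qn n !=set0.
  case: (svalP (s n)) => _ [y [Qy Cly]] _.
  by exists y; split => //; exact: subset_closure.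
pose F := filter_from [set: nat] Qn.
have FF : ProperFilter F.
  apply: filter_from_proper; last by move=> i _; exact: Qne.
  apply: filter_from_filter; first by exists 0%N.
  move=> i j _ _; exists (maxn i j) => // y Qy.
  by split; apply: (Qdec _ _ _ y Qy); [exact: leq_maxl | exact: leq_maxr].
have cQ0 : compact (Qn 0%N).
  by case: (svalP (s 0%N)) => _ _ c; exact: compact_closedI.
have [p [Q0p clp]] := cQ0 F FF (ex_intro2 _ _ 0%N I (fun y (h : Qn 0%N y) => h)).
have Qp n : Qn n p.
  have clQ : closed (Qn n) by apply: closedI => //; exact: closed_closure.
  apply: clQ => B nB.
  by apply: clp nB; exists n.
have [n _ Cnp] := ClC p Q0p.2.
have [_ nC] := sS n p (Qp n.+1).1.
exact: nC Cnp.
Qed.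

Lemma isometry_continuous (R : realType) (M : metricType R) (T : M -> M) :
  (forall x y, mdist (T x) (T y) = mdist x y) -> continuous T.
Proof.
move=> iso x A /nbhs_ballP [r r0 sA]; apply/nbhs_ballP; exists r => // y.
by rewrite !ballEmdist /= => h; apply: sA; rewrite ballEmdist /= iso.
Qed.

Lemma tg_mulA (G : topologicalType) mul inv (e : G) : topological_group mul inv e ->
  forall x y z, mul x (mul y z) = mul (mul x y) z.
Proof. by case. Qed.
Lemma tg_mul1 (G : topologicalType) mul inv (e : G) : topological_group mul inv e ->
  forall x, mul e x = x.
Proof. by case=> _ h _ _ _ x; case: (h x). Qed.
Lemma tg_mulg1 (G : topologicalType) mul inv (e : G) : topological_group mul inv e ->
  forall x, mul x e = x.
Proof. by case=> _ h _ _ _ x; case: (h x). Qed.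
Lemma tg_mulV (G : topologicalType) mul inv (e : G) : topological_group mul inv e ->
  forall x, mul (inv x) x = e.
Proof. by case=> _ _ h _ _ x; case: (h x). Qed.
Lemma tg_mulgV (G : topologicalType) mul inv (e : G) : topological_group mul inv e ->
  forall x, mul x (inv x) = e.
Proof. by case=> _ _ h _ _ x; case: (h x). Qed.
Lemma tg_mulK (G : topologicalType) mul inv (e : G) : topological_group mul inv e ->
  forall x y, mul (inv x) (mul x y) = y.
Proof. by move=> hg x y; rewrite (tg_mulA hg) (tg_mulV hg) (tg_mul1 hg). Qed.
Lemma tg_mulKV (G : topologicalType) mul inv (e : G) : topological_group mul inv e ->
  forall x y, mul x (mul (inv x) y) = y.
Proof. by move=> hg x y; rewrite (tg_mulA hg) (tg_mulgV hg) (tg_mul1 hg). Qed.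
Lemma tg_mulKr (G : topologicalType) mul inv (e : G) : topological_group mul inv e ->
  forall x y, mul (mul y x) (inv x) = y.
Proof. by move=> hg x y; rewrite -(tg_mulA hg) (tg_mulgV hg) (tg_mulg1 hg). Qed.
Lemma tg_mulKVr (G : topologicalType) mul inv (e : G) : topological_group mul inv e ->
  forall x y, mul (mul y (inv x)) x = y.
Proof. by move=> hg x y; rewrite -(tg_mulA hg) (tg_mulV hg) (tg_mulg1 hg). Qed.
Lemma tg_invu (G : topologicalType) mul inv (e : G) : topological_group mul inv e ->
  forall x y, mul x y = e -> y = inv x.
Proof.
move=> hg x y h; rewrite -(tg_mulK hg x y) h (tg_mulg1 hg) //.
Qed.
Lemma tg_invK (G : topologicalType) mul inv (e : G) : topological_group mul inv e ->
  forall x, inv (inv x) = x.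
Proof. by move=> hg x; apply/esym/(tg_invu hg); rewrite (tg_mulV hg). Qed.
Lemma tg_invM (G : topologicalType) mul inv (e : G) : topological_group mul inv e ->
  forall x y, inv (mul x y) = mul (inv y) (inv x).
Proof.
move=> hg x y; apply/esym/(tg_invu hg).
by rewrite -(tg_mulA hg) (tg_mulA hg y) (tg_mulgV hg) (tg_mul1 hg) (tg_mulgV hg).
Qed.

Lemma tg_contM (Y G : topologicalType) mul inv (e : G) : topological_group mul inv e ->
  forall f h : Y -> G, continuous f -> continuous h -> continuous (fun y => mul (f y) (h y)).
Proof.
case=> _ _ _ cm _ f k cf ck y.
apply: (@continuous2_cvg _ _ _ _ _ _ f k mul) => //; [exact: (cm (f y, k y))|exact: cf|exact: ck].
Qed.
Lemma tg_contV (Y G : topologicalType) mul inv (e : G) : topological_group mul inv e ->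
  forall f : Y -> G, continuous f -> continuous (fun y => inv (f y)).
Proof.
case=> _ _ _ _ ci f cf y.
exact: (continuous_comp (cf y) (ci (f y))).
Qed.
Lemma act_cont (Y G M : topologicalType) mul (e : G) (act : G -> M -> M) :
  continuous_action mul e act ->
  forall (f : Y -> G) (u : Y -> M), continuous f -> continuous u ->
  continuous (fun y => act (f y) (u y)).
Proof.
case=> _ _ ca f u cf cu y.
apply: (@continuous2_cvg _ _ _ _ _ _ f u act) => //; [exact: (ca (f y, u y))|exact: cf|exact: cu].
Qed.
Lemma cont_id (Y : topologicalType) : continuous (fun y : Y => y).
Proof. by move=> y; apply: cvg_id. Qed.
Lemma cont_cst (Y Z : topologicalType) (c : Z) : continuous (fun y : Y => c).
Proof. by move=> y; apply: cvg_cst. Qed.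

Lemma cont_fst (X Y : topologicalType) : continuous (@fst X Y).
Proof. by move=> p; exact: cvg_fst. Qed.
Lemma cont_snd (X Y : topologicalType) : continuous (@snd X Y).
Proof. by move=> p; exact: cvg_snd. Qed.

Lemma phiM (G : topologicalType) mul inv (e g : G) : topological_group mul inv e ->
  forall a c, mul (mul (mul a c) g) (inv (mul a c)) =
              mul (mul a (mul (mul c g) (inv c))) (inv a).
Proof. by move=> hg a c; rewrite (tg_invM hg) !(tg_mulA hg). Qed.

Lemma conj_open (G : topologicalType) (mul : G -> G -> G) (inv : G -> G) (e g : G) :
  topological_group mul inv e -> locally_compact_space G ->
  (exists W : nat -> set G, (forall n, compact (W n)) /\ (forall x, exists n, W n x)) ->
  closed (conj_class mul inv g) ->
  forall V, nbhs e V -> exists Q : set G, [/\ open Q, Q g &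
    forall y, Q y -> conj_class mul inv g y -> exists2 v, V v & y = mul (mul v g) (inv v)].
Proof.
move=> hg [hG lG] [W [cW covW]] hcl V nV.
pose phi y := mul (mul y g) (inv y).
have cphi : continuous phi.
  apply: (tg_contM hg (f := fun y => mul y g) (h := inv)).
    exact: (tg_contM hg (f := id) (h := fun=> g) (@cont_id _) (@cont_cst _ _ g)).
  exact: (tg_contV hg (f := id) (@cont_id _)).
have cq : continuous (fun p : G * G => mul (inv p.1) p.2).
  by apply: (tg_contM hg); [apply: (tg_contV hg); exact: cont_fst | exact: cont_snd].
have nq : nbhs (e, e) ((fun p : G * G => mul (inv p.1) p.2) @^-1` V).
  by apply: cq; rewrite /= (tg_mulV hg).
case: nq => -[A B] /= [nA nB] sAB.
have [V1 [nV1 cV1 V1AB]] := lc_nbhs hG lG (filterI nA nB).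
have V1V : forall a b, V1 a -> V1 b -> V (mul (inv a) b).
  move=> a b /V1AB [Aa _] /V1AB [_ Bb]; exact: (sAB (a, b)).
have cov1 : forall n, exists l : seq G, forall x, W n x ->
    exists2 h, h \in l & V1° (mul (inv h) x).
  move=> n.
  have [||J fJ WJ] := compact_fin (cW n) (U := fun h => [set x | V1° (mul (inv h) x)]).
  - move=> h; apply: (open_comp (f := fun x => mul (inv h) x)).
      move=> x _; exact: (tg_contM hg (f := fun=> inv h) (h := id) (@cont_cst _ _ (inv h)) (@cont_id _)).
    exact: open_interior.
  - move=> x _; exists x => //=; rewrite (tg_mulV hg); exact: nV1.
  have [l Jl] := (finite_seqP J).1 fJ.
  exists l => x /WJ [h Jh Vh]; exists h => //.
  by move: Jh; rewrite Jl.
move: cov1 => /choice [l Hl].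
have cpm : forall h, continuous (fun v => phi (mul h v)).
  move=> h v; apply: (continuous_comp (f := fun v => mul h v)); last exact: cphi.
  exact: (tg_contM hg (f := fun=> h) (h := id) (@cont_cst _ _ h) (@cont_id _)).
pose C k := match @choice.unpickle (nat * nat)%type k with
  | Some (n, i) => [set phi (mul (nth e (l n) i) v) | v in V1]
  | None => set0 end.
have clC : forall k, closed (C k).
  move=> k; rewrite /C; case: (choice.unpickle k) => [[n i]|]; last exact: closed0.
  apply: compact_closed => //; apply: continuous_compact => //.
  by apply: continuous_subspaceT; exact: cpm.
have ClC : conj_class mul inv g `<=` \bigcup_k C k.
  move=> y [h' _ <-].
  have [n Wh'] := covW h'.
  have [h hl Vh] := Hl n h' Wh'.
  have /(nthP e) [i il hi] := hl.
  exists (choice.pickle (n, i)) => //.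
  rewrite /C choice.pickleK /=.
  exists (mul (inv h) h'); first exact: interior_subset.
  by rewrite hi (tg_mulKV hg).
have ie : inv e = e by apply/esym/(tg_invu hg); rewrite (tg_mul1 hg).
have ne : conj_class mul inv g !=set0.
  by exists g; exists e => //; rewrite (tg_mul1 hg) ie (tg_mulg1 hg).
have [k [Q [oQ [y0 [Qy0 Cly0]] QC]]] := baire_lc hG lG hcl ne clC ClC.
move: QC; rewrite /C; case: (choice.unpickle k) => [[n i]|] QC; last first.
  by have := QC y0 (conj Qy0 Cly0).
set h := nth e (l n) i in QC.
have [v0 V1v0 y0E] := QC y0 (conj Qy0 Cly0).
pose a := mul h v0.
exists [set x | Q (mul (mul a x) (inv a))]; split.
- apply: (open_comp (f := fun x => mul (mul a x) (inv a))) => // x _.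
  apply: (tg_contM hg (f := fun x => mul a x) (h := fun=> inv a)).
    exact: (tg_contM hg (f := fun=> a) (h := id) (@cont_cst _ _ a) (@cont_id _)).
  exact: (@cont_cst _ _ (inv a)).
- by move: Qy0; rewrite -y0E.
- move=> x Qx [b _ xE].
  have Clx' : conj_class mul inv g (mul (mul a x) (inv a)).
    by exists (mul a b) => //; rewrite (phiM _ hg) xE.
  have [v V1v vE] := QC _ (conj Qx Clx').
  exists (mul (inv v0) v); first exact: V1V.
  have -> : mul (inv v0) v = mul (inv a) (mul h v).
    by rewrite /a (tg_invM hg) -(tg_mulA hg) (tg_mulK hg).
  have vE' : mul (mul (mul h v) g) (inv (mul h v)) = mul (mul a x) (inv a) := vE.
  rewrite (phiM _ hg) vE' (tg_invK hg).
  by rewrite -(tg_mulA hg a x (inv a)) (tg_mulK hg) (tg_mulKVr hg).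
Qed.

Lemma conj_proper (G : topologicalType) (mul : G -> G -> G) (inv : G -> G) (e g : G) :
  topological_group mul inv e -> locally_compact_space G ->
  (exists W : nat -> set G, (forall n, compact (W n)) /\ (forall x, exists n, W n x)) ->
  closed (conj_class mul inv g) ->
  forall C : set G, compact C -> C `<=` conj_class mul inv g ->
  exists2 W : set G, compact W &
    forall h, C (mul (mul (inv h) g) h) ->
      exists2 z, centraliser mul g z & exists2 w, W w & h = mul z w.
Proof.
move=> hg lcG sc hcl C cC CCl.
have [hG lG] := lcG.
have [V0 [nV0 cV0 _]] := lc_nbhs hG lG (@filterT _ (nbhs e) _).
have [Q [oQ Qg QV]] := conj_open hg lcG sc hcl nV0.
have : forall c : G, exists b : G, C c -> c = mul (mul b g) (inv b).
  move=> c; case: (pselect (C c)) => [/CCl [b _ <-]|nc]; first by exists b.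
  by exists c.
move=> /choice [b Hb].
have [||J fJ CJ] := compact_fin cC
   (U := fun c => [set x | Q (mul (mul (inv (b c)) x) (b c))]).
- move=> c; apply: (open_comp (f := fun x => mul (mul (inv (b c)) x) (b c))) => // x _.
  apply: (tg_contM hg (f := fun x => mul (inv (b c)) x) (h := fun=> b c)).
    exact: (tg_contM hg (f := fun=> inv (b c)) (h := id) (@cont_cst _ _ _) (@cont_id _)).
  exact: (@cont_cst _ _ (b c)).
- move=> c Cc; exists c => //=; rewrite {2}(Hb c Cc).
  by rewrite !(tg_mulA hg) (tg_mulV hg) (tg_mul1 hg) (tg_mulKVr hg).
exists (\bigcup_(c in J) [set mul (inv v) (inv (b c)) | v in V0]).
  apply: bigcup_compact => // c _; apply: continuous_compact => //.
  apply: continuous_subspaceT.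
  exact: (tg_contM hg (f := fun v => inv v) (h := fun=> inv (b c)) (tg_contV hg (f := id) (@cont_id _)) (@cont_cst _ _ _)).
move=> h Ch.
have [c Jc /= Qc] := CJ _ Ch.
set t := mul h (b c).
have E0 : mul (mul (inv (b c)) (mul (mul (inv h) g) h)) (b c) = mul (mul (inv t) g) t.
  by rewrite /t (tg_invM hg) !(tg_mulA hg).
have Clt : conj_class mul inv g (mul (mul (inv t) g) t).
  by exists (inv t) => //; rewrite (tg_invK hg).
rewrite E0 in Qc.
have [v V0v vE] := QV _ Qc Clt.
have E1 : mul g t = mul t (mul (mul v g) (inv v)).
  by rewrite -vE !(tg_mulA hg) (tg_mulgV hg) (tg_mul1 hg).
exists (mul t v).
  by rewrite /centraliser /= (tg_mulA hg g t v) E1 !(tg_mulA hg) (tg_mulKVr hg).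
exists (mul (inv v) (inv (b c))); first by exists c => //; exists v.
by rewrite /t -(tg_mulA hg) (tg_mulKV hg) (tg_mulKr hg).
Qed.

Lemma act_e (G M : topologicalType) mul (e : G) (act : G -> M -> M) :
  continuous_action mul e act -> forall m, act e m = m.
Proof. by case. Qed.
Lemma act_mul (G M : topologicalType) mul (e : G) (act : G -> M -> M) :
  continuous_action mul e act -> forall g h m, act (mul g h) m = act g (act h m).
Proof. by case. Qed.

Unset Implicit Arguments.

Theorem lemma3p16 (R : realType) (M : metricType R) (G : topologicalType)
  (mul : G -> G -> G) (inv : G -> G) (e : G) (act : G -> M -> M)
  (T : M -> M) (g : G) :
  (* M: complete Riemannian manifold (topological/metric shadow) *)
  complete_metric M ->
  locally_compact_space M ->
  @second_countable M ->
  (* G: locally compact unimodular group *)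
  topological_group mul inv e ->
  locally_compact_space G ->
  @unimodular R G mul ->
  (* proper, cocompact, isometric action *)
  continuous_action mul e act ->
  proper_action act ->
  cocompact_action act ->
  (forall h x y, mdist (act h x) (act h y) = mdist x y) ->
  (* T : G-equivariant isometry *)
  bijective T ->
  (forall x y, mdist (T x) (T y) = mdist x y) ->
  (forall h m, T (act h m) = act h (T m)) ->
  (* closed conjugacy class *)
  closed (conj_class mul inv g) ->
  quotient_compact act (centraliser mul g) (fixed_set act g T).
Proof.
move=> _ lcM scM hg lcG _ ca pa cca _ _ isoT eqT hcl.
have [hM lM] := lcM.
have [hG lG] := lcG.
have cT : continuous T := isometry_continuous isoT.
have cact : continuous (fun p : G * M => act p.1 p.2) by case: ca.
have cacth : forall h, continuous (act h).
  move=> h; exact: (act_cont ca (f := fun=> h) (u := id) (@cont_cst _ _ h) (@cont_id _)).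
have [K cK GK] : exists2 K : set M, compact K & forall m, exists h k, K k /\ m = act h k.
  have : forall m : M, exists N, [/\ nbhs m N, compact N & N `<=` setT].
    by move=> m; exact: (lc_nbhs hM lM (@filterT _ (nbhs m) _)).
  move=> /choice [N HN].
  have [||| J fJ covJ] := cca M (fun m => \bigcup_h (act h @^-1` (N m)°)).
  - move=> m; apply: bigcup_open => h _.
    by apply: (open_comp (f := act h)) => [x _|]; [exact: cacth | exact: open_interior].
  - move=> m h x _ _ [h0 _ /= Nx]; exists (mul h0 (inv h)) => //=.
    by rewrite (act_mul ca) -(act_mul ca (inv h)) (tg_mulV hg) (act_e ca).
  - move=> m _; exists m => //; exists e => //=; rewrite (act_e ca).
    by case: (HN m).
  exists (\bigcup_(m in J) N m).
    by apply: bigcup_compact => // m _; case: (HN m).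
  move=> m; have [i Ji [h _ Nm]] := covJ m I.
  exists (inv h), (act h m); split; first by exists i => //; exact: interior_subset.
  by rewrite -(act_mul ca) (tg_mulV hg) (act_e ca).
have act_inv : forall h m, act (inv h) (act h m) = m.
  by move=> h m; rewrite -(act_mul ca) (tg_mulV hg) (act_e ca).
move=> I U oU invU covF.
case: (pselect (exists m : M, True)) => [[m0 _]|nM]; last first.
  by exists set0; [exact: finite_set0 | move=> x _; exfalso; apply: nM; exists x].
have [h0 [k0 [Kk0 _]]] := GK m0.
have sc : exists W : nat -> set G, (forall n, compact (W n)) /\ (forall x, exists n, W n x).
  have [B cB [Bo Bb]] := scM.
  have [i iinj] := countable_injP _ cB.
  pose f (n : nat) : set M := match pselect (exists A, B A /\ i A = n) with
    | left p => proj1_sig (cid p) | right _ => set0 end.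
  have fsurj : forall A, B A -> f (i A) = A.
    move=> A BA; rewrite /f; case: pselect => [p|]; last by case; exists A.
    case: (cid p) => A' [BA' iA'] /=.
    by apply: iinj => //; apply/mem_set.
  pose Cn n := if pselect (compact (closure (f n))) is left _ then closure (f n) else set0.
  have cCn : forall n, compact (Cn n).
    by move=> n; rewrite /Cn; case: pselect => // _; exact: compact0.
  exists (fun n => fst @` ((fun p : G * M => (act p.1 p.2, p.2)) @^-1` (Cn n `*` K))).
  split.
    move=> n; apply: continuous_compact; first by apply: continuous_subspaceT; exact: cont_fst.
    by apply: pa; exact: compact_setX.
  move=> x.
  have [N [nN cN _]] := lc_nbhs hM lM (@filterT _ (nbhs (act x k0)) _).
  have [A [BA Ax] AN] := Bb (act x k0) N nN.
  exists (i A), (x, k0) => //; split => //=.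
  have clAN : closure A `<=` N.
    by move=> y cly; apply: (compact_closed hM cN); exact: (closureS AN).
  have cA : compact (closure A).
    by apply: (subclosed_compact _ cN) => //; exact: closed_closure.
  rewrite /Cn fsurj //; case: pselect => // _.
  exact: subset_closure.
have cTK : compact (T @` K).
  by apply: continuous_compact => //; apply: continuous_subspaceT.
pose S := fst @` ((fun p : G * M => (act p.1 p.2, p.2)) @^-1` (K `*` (T @` K))).
have cS : compact S.
  apply: continuous_compact; first by apply: continuous_subspaceT; exact: cont_fst.
  by apply: pa; exact: compact_setX.
have cC : compact (S `&` conj_class mul inv g) by exact: compact_closedI.
have [W cW HW] := conj_proper hg lcG sc hcl cC (fun x => @proj2 _ _).
pose L := [set act p.1 p.2 | p in W `*` K].
have cL : compact L.
  apply: continuous_compact; first by apply: continuous_subspaceT.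
  exact: compact_setX.
have clF : closed (fixed_set act g T).
  apply: (closed_eqfun (f := fun m => act g (T m)) (h := id)) => //.
    by move=> x; apply: continuous_comp; [exact: cT | exact: cacth].
  exact: cont_id.
have cLF : compact (L `&` fixed_set act g T) by exact: compact_closedI.
have Fstable : forall z x, centraliser mul g z -> fixed_set act g T x ->
    fixed_set act g T (act z x).
  move=> z x Zz Fx; rewrite /fixed_set /= eqT -(act_mul ca) -Zz (act_mul ca).
  by rewrite Fx.
have [J fJ cJ] := compact_fin cLF oU (fun x Lx => covF x Lx.2).
exists J => // x Fx.
have [h [k [Kk xE]]] := GK x.
have Ch : (S `&` conj_class mul inv g) (mul (mul (inv h) g) h).
  split; last by exists (inv h) => //; rewrite (tg_invK hg).
  exists (mul (mul (inv h) g) h, T k) => //; split => //=; last by exists k.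
  rewrite !(act_mul ca) -eqT -xE Fx xE.
  by rewrite act_inv.
have [z Zz [w Ww hE]] := HW h Ch.
have Zz' : centraliser mul g (inv z).
  have H1 : mul (inv z) (mul (mul z g) (inv z)) = mul (inv z) (mul (mul g z) (inv z)).
    by rewrite Zz.
  move: H1; rewrite (tg_mulKr hg) -(tg_mulA hg z g) (tg_mulK hg) => H1.
  by rewrite /centraliser /= H1.
have Ly : L (act w k) by exists (w, k).
have xE' : x = act z (act w k) by rewrite xE hE (act_mul ca).
have Fy : fixed_set act g T (act w k).
  have -> : act w k = act (inv z) x by rewrite xE' act_inv.
  exact: Fstable.
have [j Jj Uj] := cJ _ (conj Ly Fy).
exists j => //; rewrite xE'.
exact: invU.
Qed.
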